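(* Let $b\ge2$ be an integer and let $w=d_1\dots d_p$ be a fixed block of $b$-ary digits with $p\ge1$. Let $u=d_1\dots d_{p-1}$ and $v=d_2\dots d_p$. Let $k\ge1$. Then for every string $s$ of length $p-1$, the following identity of formal Laurent series in $t$ holds: $$Z_w(s,k)=t^{2-p}\,Z_w(s,0,u)\,Z_w(v,k-1).$$
   Context: Strings are finite sequences over $\{0,\dots,b-1\}$, including the empty string $\epsilon$. $k_w(X)$ is the number of possibly overlapping occurrences of $w$ in the string $X$, and $X$ is $j$-admissible if $k_w(X)=j$. For strings $x,y$ and $j\ge0$, $Z_w(x,j,y)=\sum_{l\ge0}c_l t^l$, where $c_l$ is the number of $j$-admissible strings of length $l$ that have $x$ as a prefix and $y$ as a suffix. Also $Z_w(x,j)=Z_w(x,j,\epsilon)$. When $p=1$, $u=v=s=\epsilon$. *)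

(* Defs.v *)
From mathcomp Require Import all_boot.
Set Implicit Arguments. Unset Strict Implicit. Unset Printing Implicit Defensive.

(* k_w(X): number of (possibly overlapping) occurrences of w in X,
   i.e. number of positions i with X[i..i+|w|-1] = w. *)
Definition occ (b : nat) (w X : seq 'I_b) : nat :=
  count (fun i => take (size w) (drop i X) == w) (iota 0 (size X).+1).

(* c_l of Z_w(x,j,y): number of j-admissible strings of length l having
   x as a prefix and y as a suffix. *)
Definition Zcoef (b : nat) (w x : seq 'I_b) (j : nat) (y : seq 'I_b) (l : nat) : nat :=
  #|[set X : l.-tuple 'I_b | [&& prefix x X, suffix y X & occ w X == j]]|.

Definition conv (f g : nat -> nat) (m : nat) : nat :=
  \sum_(i < m.+1) f i * g (m - i).

(* Coefficient of t^n (n >= 0) in the Laurent series t^(2-p) * F, where F is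
   a power series given by its coefficient function. The statement separately
   requires that the negative-degree coefficients of t^(2-p) * F vanish, so the
   two conjuncts together express equality of formal Laurent series. *)
Definition shift_coef (p : nat) (F : nat -> nat) (n : nat) : nat :=
  if 2 <= n + p then F (n + p - 2) else 0.

(* Main.v *)
Require Import Defs.
From mathcomp Require Import all_boot zify.
Set Implicit Arguments. Unset Strict Implicit.

Lemma card_bij (T1 T2 : finType) (A : {set T1}) (B : {set T2})
  (f : T1 -> T2) (g : T2 -> T1) :
  (forall x, x \in A -> f x \in B /\ g (f x) = x) ->
  (forall y, y \in B -> g y \in A /\ f (g y) = y) -> #|A| = #|B|.
Proof.
move=> HA HB.
rewrite -(@card_in_imset _ _ f A); last first.
  by move=> x y xA yA e; rewrite -(HA x xA).2 e (HA y yA).2.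
apply: eq_card => y; apply/imsetP/idP.
- by case=> x xA ->; exact: (HA x xA).1.
- by move=> yB; exists (g y); [exact: (HB y yB).1 | rewrite (HB y yB).2].
Qed.

Definition mkt (b : nat) (x0 : 'I_b) (l : nat) (s : seq 'I_b) : l.-tuple 'I_b :=
  insubd (nseq_tuple l x0) s.

Lemma val_mkt b (x0 : 'I_b) l s : size s = l -> val (mkt x0 l s) = s.
Proof. by move=> h; rewrite /mkt val_insubd h eqxx. Qed.

Lemma transfer b (x0 : 'I_b) l l' (P Q : pred (seq 'I_b)) (f g : seq 'I_b -> seq 'I_b) :
  (forall X, size X = l -> P X -> [/\ size (f X) = l', Q (f X) & g (f X) = X]) ->
  (forall Y, size Y = l' -> Q Y -> [/\ size (g Y) = l, P (g Y) & f (g Y) = Y]) ->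
  #|[set X : l.-tuple 'I_b | P X]| = #|[set X : l'.-tuple 'I_b | Q X]|.
Proof.
move=> H1 H2.
apply: (@card_bij _ _ _ _ (fun X : l.-tuple 'I_b => mkt x0 l' (f X))
                         (fun Y : l'.-tuple 'I_b => mkt x0 l (g Y))).
- move=> X; rewrite inE => PX; have [s1 q1 e1] := H1 X (size_tuple X) PX.
  split; first by rewrite inE val_mkt.
  apply: val_inj; rewrite (val_mkt x0 s1) e1 val_mkt // size_tuple //.
- move=> X; rewrite inE => PX; have [s1 q1 e1] := H2 X (size_tuple X) PX.
  split; first by rewrite inE val_mkt.
  apply: val_inj; rewrite (val_mkt x0 s1) e1 val_mkt // size_tuple //.
Qed.

Lemma card_prod b (x0 : 'I_b) l a (P Q : pred (seq 'I_b)) : a <= l ->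
  #|[set X : l.-tuple 'I_b | P (take a X) && Q (drop a X)]| =
  #|[set X : a.-tuple 'I_b | P X]| * #|[set X : (l - a).-tuple 'I_b | Q X]|.
Proof.
move=> al; rewrite -cardsX; symmetry.
apply: (@card_bij _ _ _ _
   (fun YZ : a.-tuple 'I_b * (l - a).-tuple 'I_b => mkt x0 l (YZ.1 ++ YZ.2))
   (fun X : l.-tuple 'I_b => (mkt x0 a (take a X), mkt x0 (l - a) (drop a X)))).
- case=> Y Z; rewrite !inE /= => /andP[pY qZ].
  have sz : size (Y ++ Z) = l by rewrite size_cat !size_tuple; lia.
  rewrite val_mkt // take_size_cat ?size_tuple // drop_size_cat ?size_tuple //.
  split; first by rewrite pY qZ.
  by congr pair; apply: val_inj; rewrite val_mkt ?size_tuple.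
- move=> X; rewrite !inE => /andP[pX qX].
  have s1 : size (take a X) = a by rewrite size_takel // size_tuple.
  have s2 : size (drop a X) = l - a by rewrite size_drop size_tuple.
  split; first by rewrite /= !val_mkt // pX qX.
  by apply: val_inj; rewrite /= (val_mkt x0 s1) (val_mkt x0 s2) cat_take_drop val_mkt // size_tuple.
Qed.

Lemma card_sum (T : finType) (R : pred T) : #|[set X | R X]| = \sum_X (R X : nat).
Proof.
rewrite -sum1_card big_mkcond /=; apply: eq_bigr => X _; rewrite inE; by case: (R X).
Qed.

Lemma card_part b n N (P : pred (seq 'I_b)) (fo : seq 'I_b -> nat) :
  (forall X, size X = n -> P X -> fo X < N) ->
  #|[set X : n.-tuple 'I_b | P X]| =
  \sum_(i < N) #|[set X : n.-tuple 'I_b | P X && (fo X == i)]|.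
Proof.
move=> H; rewrite card_sum.
under [RHS]eq_bigr do rewrite card_sum.
rewrite exchange_big /=; apply: eq_bigr => X _.
case PX: (P X) => /=; last by rewrite big1.
have lt := H X (size_tuple X) PX.
rewrite (bigD1 (Ordinal lt)) //= eqxx big1 // => i /negbTE ne.
by apply/eqP; rewrite eqb0; apply/negP => /eqP e; move: ne; rewrite -(inj_eq val_inj) /= e eqxx.
Qed.

Lemma occ_cat b (w A B : seq 'I_b) :
  occ w (A ++ B) =
  count (fun t => take (size w) (drop t (A ++ B)) == w) (iota 0 (size A)) + occ w B.
Proof.
rewrite /occ size_cat -addnS iotaD count_cat.
have -> : iota (0 + size A) (size B).+1 = map (addn (size A)) (iota 0 (size B).+1)
  by rewrite -iotaDl addn0.
rewrite count_map.
congr (_ + _); apply: eq_count => t /=.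
by rewrite addnC -drop_drop drop_size_cat.
Qed.

Lemma occ_cons b (w B : seq 'I_b) x :
  occ w (x :: B) = (take (size w) (x :: B) == w) + occ w B.
Proof. by rewrite -cat1s occ_cat /= addn0. Qed.

Lemma occ_short b (w T : seq 'I_b) : size T < size w -> occ w T = 0.
Proof.
move=> h; rewrite /occ; apply/eqP; rewrite -leqn0 leqNgt -has_count.
apply/hasPn => t _; apply/negP => /eqP e.
have := congr1 size e; rewrite size_take_min size_drop.
have := leq_subr t (size T); move: (size T - t) => k hk hm.
by have := leq_trans (geq_minr (size w) k) hk; rewrite hm => /leq_ltn_trans /(_ h); rewrite ltnn.
Qed.

Lemma take_cat_take b (B T : seq 'I_b) n m : n <= size B + m ->
  take n (B ++ T) = take n (B ++ take m T).
Proof.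
move=> h; rewrite !take_cat; case: ifP => // _.
by rewrite take_takel //; lia.
Qed.

Lemma count_early b (w Y T : seq 'I_b) :
  count (fun t => take (size w) (drop t (Y ++ T)) == w) (iota 0 (size Y)) =
  count (fun t => take (size w) (drop t (Y ++ take (size w).-1 T)) == w) (iota 0 (size Y)).
Proof.
apply: eq_in_count => t; rewrite mem_iota add0n => /andP[_ ht] /=.
rewrite !drop_cat ht; congr (_ == _); apply: take_cat_take.
rewrite size_drop; lia.
Qed.

Definition fo b (w X : seq 'I_b) :=
  find (fun t => take (size w) (drop t X) == w) (iota 0 (size X).+1).

Lemma find_eq (T : Type) (a : pred T) s i x0 : i < size s ->
  (find a s == i) = a (nth x0 s i) && ~~ has a (take i s).
Proof.
elim: s i => [|y s IH] [|i] //= h.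
- by case: (a y).
- by case: (a y) => /=; rewrite ?andbF // eqSS; exact: IH.
Qed.

Lemma fo_eq b (w X : seq 'I_b) i : i <= size X ->
  (fo w X == i) = (take (size w) (drop i X) == w) &&
     (count (fun t => take (size w) (drop t X) == w) (iota 0 i) == 0).
Proof.
move=> h; rewrite /fo (@find_eq _ _ _ _ 0) ?size_iota // nth_iota // add0n take_iota.
have -> : minn i (size X).+1 = i by lia.
by rewrite has_count lt0n negbK.
Qed.

Lemma fo_lt b (w X : seq 'I_b) : 0 < size w -> 0 < occ w X -> fo w X < size X.
Proof.
move=> hw; rewrite /occ -has_count => hh.
have := nth_find 0 hh; rewrite -/(fo w X).
have := hh; rewrite has_find size_iota => hf.
rewrite nth_iota // add0n => /eqP e.
have := congr1 size e; rewrite size_take_min size_drop. move: hw; move: (size w) (size X) (fo w X) => sw sx f; lia.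
Qed.

Lemma core b (d1 : 'I_b) (v s Y Z : seq 'I_b) k : 0 < k -> size s = size v ->
  [&& [&& prefix s (Y ++ d1 :: Z), suffix [::] (Y ++ d1 :: Z)
        & occ (d1 :: v) (Y ++ d1 :: Z) == k] & fo (d1 :: v) (Y ++ d1 :: Z) == size Y]
  = [&& prefix s (Y ++ take (size v) (d1 :: v)),
        suffix (take (size v) (d1 :: v)) (Y ++ take (size v) (d1 :: v))
      & occ (d1 :: v) (Y ++ take (size v) (d1 :: v)) == 0]
    && [&& prefix v Z, suffix [::] Z & occ (d1 :: v) Z == k.-1].
Proof.
move=> hk hs.
set w := d1 :: v; set u := take (size v) w.
rewrite !suffix0s suffix_suffix /=.
rewrite fo_eq; last by rewrite size_cat leq_addr.
rewrite drop_size_cat //.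
have Hwin : (take (size w) (d1 :: Z) == w) = prefix v Z.
  by rewrite /w /= eqseq_cons eqxx prefixE.
have su : size u = size v by rewrite /u size_takel // /w /= leqnSn.
rewrite Hwin occ_cat occ_cons Hwin [occ w (Y ++ u)]occ_cat (@occ_short _ w u) ?addn0;
  last by rewrite su /w.
case pv: (prefix v Z); last by rewrite !andbF.
have Hu : take (size v) (d1 :: Z) = u.
  by move/prefixP: pv => [Z' ->]; rewrite /u /w -cat_cons takel_cat //= leqnSn.
have E1 : count (fun t => take (size w) (drop t (Y ++ d1 :: Z)) == w) (iota 0 (size Y))
   = count (fun t => take (size w) (drop t (Y ++ u)) == w) (iota 0 (size Y)).
  by rewrite count_early /= Hu.
have Ep : prefix s (Y ++ d1 :: Z) = prefix s (Y ++ u).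
  by rewrite !prefixE hs (@take_cat_take _ Y (d1 :: Z) (size v) (size v)) ?Hu // leq_addl.
rewrite E1 Ep.
case: (prefix s (Y ++ u)) => //=.
case: (count _ _) => [|c] /=; last by rewrite !andbF.
by rewrite eqxx andbT add0n add1n; case: k hk.
Qed.

Lemma term b (d1 : 'I_b) (v s : seq 'I_b) k n i : 0 < k -> size s = size v -> i < n ->
  #|[set X : n.-tuple 'I_b | [&& prefix s X, suffix [::] X & occ (d1 :: v) X == k]
                              && (fo (d1 :: v) X == i)]|
  = Zcoef (d1 :: v) s 0 (take (size v) (d1 :: v)) (i + size v)
    * Zcoef (d1 :: v) v k.-1 [::] (n.-1 - i).
Proof.
move=> hk hs hi.
set w := d1 :: v; set u := take (size v) w.
have su : size u = size v by rewrite /u size_takel // /w /= leqnSn.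
pose RY := fun Y : seq 'I_b => [&& prefix s (Y ++ u), suffix u (Y ++ u) & occ w (Y ++ u) == 0].
pose RZ := fun Z : seq 'I_b => [&& prefix v Z, suffix [::] Z & occ w Z == k.-1].
rewrite (@transfer _ d1 n n.-1 (fun X => [&& prefix s X, suffix [::] X & occ w X == k] && (fo w X == i)) (fun W => RY (take i W) && RZ (drop i W))
   (fun X => take i X ++ drop i.+1 X) (fun W => take i W ++ d1 :: drop i W)).
- rewrite (@card_prod _ d1 n.-1 i RY RZ); last by clear -hi; case: n hi => [|n'] //= hi.
  rewrite /Zcoef; congr (_ * _).
  apply: (@transfer _ d1 i (i + size v) RY (fun X => [&& prefix s X, suffix u X & occ w X == 0]) (fun Y => Y ++ u) (fun Y => take i Y)).
  + move=> Y hY HY; split => //; first by rewrite size_cat hY su.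
    by rewrite take_size_cat.
  + move=> Y hY /and3P[p1 p2 p3]; move/suffixP: p2 => [Y' eY]; subst Y.
    have sY' : size Y' = i by move: hY; rewrite size_cat su; move: (size Y') => z; lia.
    rewrite take_size_cat //; split => //.
    by rewrite /RY p1 p3 suffix_suffix.
- move=> X hX /andP[PX hfo].
  have hXi : i < size X by rewrite hX.
  have eX : X = take i X ++ nth d1 X i :: drop i.+1 X by rewrite -drop_nth // cat_take_drop.
  have nd : nth d1 X i = d1.
    move: hfo; rewrite fo_eq ?(ltnW hXi) // => /andP[/eqP hw _].
    by move: hw; rewrite (drop_nth d1 hXi) /= => -[].
  rewrite nd in eX.
  have sY : size (take i X) = i by rewrite size_takel // ltnW.
  have := @core _ d1 v s (take i X) (drop i.+1 X) k hk hs.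
  rewrite -eX sY PX hfo /= => /esym /andP[HY HZ].
  split.
  + rewrite size_cat sY size_drop hX; clear -hi; case: n hi => [|n'] //= hi; lia.
  + by rewrite take_size_cat // drop_size_cat // /RY /RZ HY HZ.
  + by rewrite take_size_cat // drop_size_cat // -eX.
- move=> W hW /andP[HY HZ].
  set Y := take i W; set Z := drop i W.
  have sY : size Y = i by rewrite /Y size_takel // hW; clear -hi; case: n hi => [|n'] //= hi.
  have := @core _ d1 v s Y Z k hk hs.
  rewrite /RY /RZ in HY HZ.
  rewrite HY HZ sY => /andP[PX hfo].
  split.
  + rewrite size_cat sY /= size_drop hW; clear -hi; case: n hi => [|n'] //= hi; lia.
  + by rewrite PX hfo.
  + by rewrite take_size_cat // -cat_rcons drop_size_cat ?size_rcons ?sY // cat_take_drop.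
Qed.

Lemma Z_prefix0 b (w x y : seq 'I_b) j l : l < size x -> Zcoef w x j y l = 0.
Proof.
move=> h; rewrite /Zcoef; apply/eqP; rewrite cards_eq0; apply/eqP/setP => X.
rewrite !inE; apply/negbTE/negP => /and3P[hp _ _].
by have := size_prefix hp; rewrite size_tuple leqNgt h.
Qed.

Lemma Z_occ0 b (w s : seq 'I_b) k n : 0 < k -> n < size w -> Zcoef w s k [::] n = 0.
Proof.
move=> hk h; rewrite /Zcoef; apply/eqP; rewrite cards_eq0; apply/eqP/setP => X.
rewrite !inE; apply/negbTE/negP => /and3P[_ _].
by rewrite occ_short ?size_tuple //; case: k hk.
Qed.

Lemma conv0 b (w s u v : seq 'I_b) j m q : size s = q -> size v = q -> m < q + q ->
  conv (Zcoef w s 0 u) (Zcoef w v j [::]) m = 0.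
Proof.
move=> hs hv hm; rewrite /conv big1 // => i _.
case: (ltnP i q) => hi; first by rewrite Z_prefix0 ?hs.
rewrite (@Z_prefix0 _ w v) ?muln0 // hv.
have := ltn_ord i; move: (nat_of_ord i) hi => z; lia.
Qed.

Unset Implicit Arguments.

Theorem lemma3 (b : nat) (hb : 2 <= b) (w : seq 'I_b) (hp : 1 <= size w)
  (k : nat) (hk : 1 <= k) (s : seq 'I_b) (hs : size s = (size w).-1) :
  let p := size w in
  let u := take p.-1 w in
  let v := drop 1 w in
  (forall n : nat,
     Zcoef w s k [::] n =
     shift_coef p (conv (Zcoef w s 0 u) (Zcoef w v k.-1 [::])) n) /\
  (forall m : nat, m.+2 < p ->
     conv (Zcoef w s 0 u) (Zcoef w v k.-1 [::]) m = 0).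
Proof.
case: w hp hs => [//|d1 v] hp hs p u v'.
rewrite {}/v' {}/u {}/p.
have -> : drop 1 (d1 :: v) = v by rewrite /= drop0.
have -> : (size (d1 :: v)).-1 = size v by [].
rewrite /= in hs.
split; last first.
  move=> m hm; apply: (@conv0 _ _ _ _ _ _ _ (size v)) => //; move: hm => /=.
  move: (size v) => z; lia.
move=> n; rewrite /shift_coef /=.
case: ifP => hn; last first.
  rewrite Z_occ0 //=; move/negbT: hn; move: (size v) => z; lia.
case: n hn => [|n] hn.
  rewrite Z_occ0 // (@conv0 _ _ _ _ _ _ _ (size v)) //; move: hn; move: (size v) => z; lia.
have -> : n.+1 + (size v).+1 - 2 = size v + n by lia.
transitivity (\sum_(i < n.+1) Zcoef (d1 :: v) s 0 (take (size v) (d1 :: v)) (i + size v)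
    * Zcoef (d1 :: v) v k.-1 [::] (n - i)).
  rewrite {1}/Zcoef (@card_part _ n.+1 n.+1 (fun X => [&& prefix s X, suffix [::] X & occ (d1 :: v) X == k]) (fo (d1 :: v))).
    by apply: eq_bigr => i _; rewrite term.
  move=> X hX /and3P[_ _ /eqP ho]; rewrite -hX; apply: fo_lt => //; by rewrite ho.
rewrite /conv -(@big_mkord _ 0 addn (size v + n).+1 xpredT (fun j =>
  Zcoef (d1 :: v) s 0 (take (size v) (d1 :: v)) j * Zcoef (d1 :: v) v k.-1 [::] (size v + n - j))).
rewrite (@big_cat_nat _ _ _ (size v)) /= ?leq0n; last by lia.
rewrite [X in _ = X + _]big_nat_cond [X in _ = X + _]big1 ?add0n; last first.
  by move=> j /andP[/andP[_ hj] _]; rewrite Z_prefix0 ?hs.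
have E := @big_addn nat 0 addn 0 (size v + n).+1 (size v) xpredT (fun j =>
  Zcoef (d1 :: v) s 0 (take (size v) (d1 :: v)) j * Zcoef (d1 :: v) v k.-1 [::] (size v + n - j)).
rewrite add0n in E; rewrite E.
have -> : (size v + n).+1 - size v = n.+1 by lia.
rewrite big_mkord; apply: eq_bigr => i _.
by rewrite (addnC i (size v)) subnDl.
all: by [].
Qed.
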